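(* Let $\alpha\in\mathbb R$ and $n\ge1$. There is a one-to-one correspondence between $(2n+1)$-dimensional $\alpha$-cosymplectic Lie algebras $(\mathfrak g,\eta,\omega)$ and pairs consisting of a $2n$-dimensional symplectic Lie algebra $(\mathfrak h,\Omega)$ together with a derivation $D\in\mathrm{Der}(\mathfrak h)$ such that $D+\alpha I$ is an infinitesimal symplectic transformation of $(\mathfrak h,\Omega)$. The correspondence sends $(\mathfrak g,\eta,\omega)$ to $\mathfrak h=\ker\eta$, $\Omega=\omega|_{\mathfrak h\times\mathfrak h}$, $D=\mathrm{ad}_\xi|_{\mathfrak h}$ ($\xi$ the Reeb vector), and conversely $(\mathfrak h,\Omega,D)$ to $\mathfrak g=\mathbb R\xi\oplus\mathfrak h$ with $[x,y]=[x,y]_{\mathfrak h}$, $[\xi,x]=Dx$ ($x,y\in\mathfrak h$), $\eta(\xi)=1$, $\eta|_{\mathfrak h}=0$, $\omega(\xi,\cdot)=0$, $\omega|_{\mathfrak h\times\mathfrak h}=\Omega$.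
   Context: For a Lie algebra, $d\eta(x,y)=-\eta([x,y])$ and $d\omega(x,y,z)=-\omega([x,y],z)-\omega([y,z],x)-\omega([z,x],y)$. An almost cosymplectic structure on a $(2n+1)$-dimensional Lie algebra $\mathfrak g$ is a pair $(\eta,\omega)$, $\eta\in\mathfrak g^*$, $\omega$ a $2$-form, with $\eta\wedge\omega^n\neq0$; its Reeb vector $\xi$ satisfies $\eta(\xi)=1$, $\omega(\xi,\cdot)=0$. It is $\alpha$-cosymplectic if $d\eta=0$ and $d\omega=2\alpha\,\eta\wedge\omega$. A symplectic structure on a $2n$-dimensional Lie algebra $\mathfrak h$ is a closed $2$-form $\Omega$ with $\Omega^n\neq0$. A linear map $\theta:\mathfrak h\to\mathfrak h$ is an infinitesimal symplectic transformation if $\theta^T\circ\Omega+\Omega\circ\theta=0$, equivalently if $(x,y)\mapsto\Omega(\theta x,y)$ is symmetric. *)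

(* Defs.v *)
From HB Require Import structures.
From mathcomp Require Import all_boot all_order all_algebra all_fingroup.
From mathcomp Require Import reals.
Set Implicit Arguments. Unset Strict Implicit. Unset Printing Implicit Defensive.
Import Order.TTheory GRing.Theory Num.Theory.
Local Open Scope ring_scope.

Section Defs.
Variables (R : fieldType) (V : lmodType R).

Definition bilinear_map (W : lmodType R) (b : V -> V -> W) : Prop :=
  (forall a x y z, b (a *: x + y) z = a *: b x z + b y z) /\
  (forall a x y z, b x (a *: y + z) = a *: b x y + b x z).

Definition is_lie (br : V -> V -> V) : Prop :=
  bilinear_map br /\ (forall x, br x x = 0) /\
  (forall x y z, br x (br y z) + br y (br z x) + br z (br x y) = 0).

Definition linear_form (eta : V -> R) : Prop :=
  forall a x y, eta (a *: x + y) = a * eta x + eta y.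

Definition two_form (om : V -> V -> R) : Prop :=
  (forall a x y z, om (a *: x + y) z = a * om x z + om y z) /\
  (forall a x y z, om x (a *: y + z) = a * om x y + om x z) /\
  (forall x, om x x = 0).

Definition d1 (br : V -> V -> V) (eta : V -> R) (x y : V) : R := - eta (br x y).
Definition d2 (br : V -> V -> V) (om : V -> V -> R) (x y z : V) : R :=
  - om (br x y) z - om (br y z) x - om (br z x) y.

Definition wedge12 (eta : V -> R) (om : V -> V -> R) (x y z : V) : R :=
  eta x * om y z + eta y * om z x + eta z * om x y.

(* k-th entry of a finite family, 0 out of range *)
Definition fam_at (m : nat) (v : 'I_m -> V) (k : nat) : V :=
  oapp v 0 (insub k).

(* (om^n)(v_0,...,v_{2n-1}), up to a fixed positive normalising constant *)
Definition omega_pow (n : nat) (om : V -> V -> R) (v : 'I_(n.*2) -> V) : R :=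
  \sum_(s : 'S_(n.*2)) (-1) ^+ s *
    \prod_(i < n) om (fam_at (v \o s) i.*2) (fam_at (v \o s) i.*2.+1).

(* (eta /\ om^n)(v_0,...,v_{2n}), up to a fixed positive normalising constant *)
Definition eta_omega_pow (n : nat) (eta : V -> R) (om : V -> V -> R)
    (v : 'I_(n.*2.+1) -> V) : R :=
  \sum_(s : 'S_(n.*2.+1)) (-1) ^+ s *
    (eta (fam_at (v \o s) 0) *
     \prod_(i < n) om (fam_at (v \o s) i.*2.+1) (fam_at (v \o s) i.*2.+2)).


Definition almost_cosymplectic (n : nat) (eta : V -> R) (om : V -> V -> R) : Prop :=
  linear_form eta /\ two_form om /\ exists v, @eta_omega_pow n eta om v != 0.

Definition alpha_cosymplectic (n : nat) (br : V -> V -> V) (alpha : R)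
    (eta : V -> R) (om : V -> V -> R) : Prop :=
  almost_cosymplectic n eta om /\
  (forall x y, d1 br eta x y = 0) /\
  (forall x y z, d2 br om x y z = 2 * alpha * wedge12 eta om x y z).

Definition is_reeb (eta : V -> R) (om : V -> V -> R) (xi : V) : Prop :=
  eta xi = 1 /\ forall y, om xi y = 0.

Definition symplectic (n : nat) (br : V -> V -> V) (om : V -> V -> R) : Prop :=
  two_form om /\ (forall x y z, d2 br om x y z = 0) /\
  exists v, @omega_pow n om v != 0.

Definition derivation (br : V -> V -> V) (D : V -> V) : Prop :=
  (forall a x y, D (a *: x + y) = a *: D x + D y) /\
  (forall x y, D (br x y) = br (D x) y + br x (D y)).

Definition inf_symplectic (om : V -> V -> R) (theta : V -> V) : Prop :=
  forall x y, om (theta x) y + om x (theta y) = 0.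

End Defs.

(* bracket on R xi (+) h :  [(s,x),(t,y)] = (0, [x,y]_h + s D y - t D x) *)
Definition ext_br (R : fieldType) (H : lmodType R) (brh : H -> H -> H)
    (D : H -> H) (p q : (R^o * H)%type) : (R^o * H)%type :=
  (0, brh p.2 q.2 + p.1 *: D q.2 - q.1 *: D p.2).

(* Main.v *)
Require Import Defs.
From HB Require Import structures.
From mathcomp Require Import all_boot all_order all_algebra all_fingroup.
From mathcomp Require Import reals.
From mathcomp Require Import ring lra zify.
From Stdlib Require Import FunctionalExtensionality.
Import Order.TTheory GRing.Theory Num.Theory.
Local Open Scope ring_scope.
Set Implicit Arguments. Unset Strict Implicit. Unset Printing Implicit Defensive.

Section Perm.
Variables (R : realType) (V : lmodType R) (N : nat) (T : ('I_N -> V) -> R).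

Definition psum (v : 'I_N -> V) : R := \sum_(s : 'S_N) (-1) ^+ s * T (v \o s).

Lemma psum_perm (v : 'I_N -> V) (t : 'S_N) :
  psum (v \o t) = (-1) ^+ t * psum v.
Proof.
rewrite /psum (reindex_inj (mulIg t^-1)%g) mulr_sumr; apply: eq_bigr => s _.
have -> : (v \o t) \o (s * t^-1)%g = v \o s.
  by apply: functional_extensionality => x /=; rewrite permM permKV.
rewrite odd_permM odd_permV signr_addb mulrA; congr (_ * _).
by case: (odd_perm s); case: (odd_perm t); rewrite /= ?expr0 ?expr1 ?mulN1r ?opprK ?mulr1 ?mul1r.
Qed.

Lemma psum_rep (v : 'I_N -> V) a b : a != b -> v a = v b -> psum v = 0.
Proof.
move=> ab vab.
have := psum_perm v (tperm a b).
have -> : v \o tperm a b = v.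
  apply: functional_extensionality => x /=.
  case: tpermP => [->|->|] //.
rewrite odd_tperm ab expr1 mulN1r => h.
have : psum v + psum v = 0 by rewrite {1}h addNr.
lra.
Qed.

Definition upd (v : 'I_N -> V) k (z : V) := fun i => if i == k then z else v i.

Lemma upd_comp v k z (s : 'S_N) : upd v k z \o s = upd (v \o s) (s^-1 k)%g z.
Proof.
apply: functional_extensionality => x /=; rewrite /upd.
by rewrite -[X in _ = if X then _ else _](inj_eq (@perm_inj _ s)) permKV.
Qed.


Hypothesis Tlin : forall u m a x y,
  T (upd u m (a *: x + y)) = a * T (upd u m x) + T (upd u m y).

Lemma psum_lin v k a x y :
  psum (upd v k (a *: x + y)) = a * psum (upd v k x) + psum (upd v k y).
Proof.
rewrite /psum mulr_sumr -big_split; apply: eq_bigr => s _ /=.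
by rewrite !upd_comp Tlin mulrDr mulrCA.
Qed.

Lemma psum_upd0 v k : psum (upd v k 0) = 0.
Proof.
have := psum_lin v k 1 0 0; rewrite scale1r addr0 mul1r => h.
have : psum (upd v k 0) + psum (upd v k 0) = psum (upd v k 0) by rewrite -h.
lra.
Qed.

Lemma psum_sum v k (I : eqType) (r : seq I) (b : I -> R) (w : I -> V) :
  psum (upd v k (\sum_(l <- r) b l *: w l)) = \sum_(l <- r) b l * psum (upd v k (w l)).
Proof.
elim: r => [|l r IH]; first by rewrite !big_nil psum_upd0.
by rewrite !big_cons psum_lin IH.
Qed.

Lemma upd_id v k : upd v k (v k) = v.
Proof. by apply: functional_extensionality => x; rewrite /upd; case: eqP => // ->. Qed.

Lemma psum_key v k (b : 'I_N -> R) :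
  psum (upd v k (\sum_l b l *: v l)) = b k * psum v.
Proof.
rewrite psum_sum (bigD1 k) //= upd_id big1 ?addr0 // => l lk.
rewrite (@psum_rep _ k l) ?mulr0 //; first by rewrite eq_sym.
by rewrite /upd eqxx (negbTE lk).
Qed.

End Perm.

Section Teo.
Variables (R : realType) (V : lmodType R).

Lemma fam_atE (W : lmodType R) m (v : 'I_m -> W) k (hk : (k < m)%N) : fam_at v k = v (Ordinal hk).
Proof. by rewrite /fam_at insubT. Qed.

Lemma fam_at_upd N (u : 'I_N -> V) m z k :
  fam_at (upd u m z) k = if k == val m then z else fam_at u k.
Proof.
rewrite /fam_at; case: insubP => [o _ <-|] /=; first by rewrite /upd.
case: eqP => // -> ; by rewrite ltn_ord.
Qed.

Definition Teo n (eta : V -> R) (om : V -> V -> R) (u : 'I_(n.*2.+1) -> V) : R :=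
  eta (fam_at u 0) * \prod_(i < n) om (fam_at u i.*2.+1) (fam_at u i.*2.+2).

Lemma eop_psum n (eta : V -> R) (om : V -> V -> R) (v : 'I_(n.*2.+1) -> V) : @eta_omega_pow _ _ n eta om v = psum (@Teo n eta om) v.
Proof. by []. Qed.

Lemma Teo_form n (eta : V -> R) (om : V -> V -> R) (u : 'I_(n.*2.+1) -> V) m :
  (exists C, forall w, @Teo n eta om (upd u m w) = eta w * C) \/
  (exists C c, forall w, @Teo n eta om (upd u m w) = om w c * C) \/
  (exists C c, forall w, @Teo n eta om (upd u m w) = om c w * C).
Proof.
rewrite /Teo.
set P := fun w => \prod_(i < n) om (if i.*2.+1 == val m then w else fam_at u i.*2.+1)
     (if i.*2.+2 == val m then w else fam_at u i.*2.+2).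
have EP : forall w, \prod_(i < n) om (fam_at (upd u m w) i.*2.+1) (fam_at (upd u m w) i.*2.+2) = P w.
  by move=> w; apply: eq_bigr => i _; rewrite !fam_at_upd.
case: (posnP (val m)) => [m0|mpos].
  have EP0 : forall w, P w = P 0.
    by move=> w; apply: eq_bigr => i _; rewrite m0.
  left; exists (P 0) => w; by rewrite EP fam_at_upd EP0 m0.
suff PE : forall w, P w =
   om (if (val m).-1./2.*2.+1 == val m then w else fam_at u (val m).-1./2.*2.+1)
     (if (val m).-1./2.*2.+2 == val m then w else fam_at u (val m).-1./2.*2.+2) *
   \prod_(i < n | i != (val m).-1./2 :> nat) om (fam_at u i.*2.+1) (fam_at u i.*2.+2).
  have mlt : (val m < n.*2.+1)%N := ltn_ord m.
  right; case: (boolP (odd (val m).-1)) => od.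
    have e1 : ((val m).-1./2.*2.+1 == val m) = false by apply/negbTE/eqP; lia.
    have e2 : ((val m).-1./2.*2.+2 == val m) by apply/eqP; lia.
    right; eexists; eexists => w.
    by rewrite EP PE fam_at_upd (ltn_eqF mpos) e1 e2 mulrCA.
  have e1 : ((val m).-1./2.*2.+1 == val m) by apply/eqP; lia.
  have e2 : ((val m).-1./2.*2.+2 == val m) = false by apply/negbTE/eqP; lia.
  left; eexists; eexists => w.
  by rewrite EP PE fam_at_upd (ltn_eqF mpos) e1 e2 mulrCA.
move=> w.
have mlt : (val m < n.*2.+1)%N := ltn_ord m.
have hj : ((val m).-1./2 < n)%N by lia.
rewrite /P (bigD1 (Ordinal hj)) //=; congr (_ * _).
apply: eq_bigr => i ij.
suff [-> ->] : (i.*2.+1 == val m) = false /\ (i.*2.+2 == val m) = false by [].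
have ij' : (i : nat) != (val m).-1./2 := ij.
by split; apply/negbTE/eqP => h; move/eqP: ij'; lia.
Qed.

Lemma Teo_lin n eta om : linear_form eta -> two_form om ->
  forall u m a x y, @Teo n eta om (upd u m (a *: x + y)) =
     a * @Teo n eta om (upd u m x) + @Teo n eta om (upd u m y).
Proof.
move=> le [o1 [o2 o3]] u m a x y.
case: (Teo_form eta om u m) => [[C E]|[[C [c E]]|[C [c E]]]]; rewrite !E.
- by rewrite le mulrDl mulrA.
- by rewrite o1 mulrDl mulrA.
- by rewrite o2 mulrDl mulrA.
Qed.

Lemma Teo_zero n (eta : V -> R) om u m d : eta d = 0 -> (forall x, om d x = 0) ->
  (forall x, om x d = 0) -> @Teo n eta om (upd u m d) = 0.
Proof.
move=> e1 e2 e3.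
case: (Teo_form eta om u m) => [[C E]|[[C [c E]]|[C [c E]]]]; rewrite !E.
- by rewrite e1 mul0r.
- by rewrite e2 mul0r.
- by rewrite e3 mul0r.
Qed.

Lemma omega_pow_ext n (W : lmodType R) (om : V -> V -> R) (om' : W -> W -> R)
   (v : 'I_(n.*2) -> V) (w : 'I_(n.*2) -> W) :
  (forall a b, om (v a) (v b) = om' (w a) (w b)) -> omega_pow om v = omega_pow om' w.
Proof.
move=> h; apply: eq_bigr => s _; congr (_ * _); apply: eq_bigr => i _.
have hi : (i < n)%N := ltn_ord i.
have b1 : (i.*2 < n.*2)%N by lia.
have b2 : (i.*2.+1 < n.*2)%N by lia.
by rewrite (fam_atE _ b1) (fam_atE _ b2) (fam_atE _ b1) (fam_atE _ b2) /= h.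
Qed.

Lemma eop_expand n (eta : V -> R) (om : V -> V -> R) (v : 'I_(n.*2.+1) -> V) :
  eta_omega_pow eta om v =
  \sum_(j < n.*2.+1) (-1) ^+ j * eta (v j) * omega_pow om (v \o lift j).
Proof.
rewrite /eta_omega_pow (partition_big (fun s : 'S_(n.*2.+1) => s ord0) predT) //=.
apply: eq_bigr => j _.
rewrite (reindex (lift_perm ord0 j)); last first.
  pose ulsf i (s : 'S_(n.*2.+1)) k := odflt k (unlift (s i) (s (lift i k))).
  have ulsfK i (s : 'S_(n.*2.+1)) k: lift (s i) (ulsf i s k) = s (lift i k).
    rewrite /ulsf; have:= neq_lift i k.
    by rewrite -(can_eq (permK s)) => /unlift_some[] ? ? ->.
  have inj_ulsf: injective (ulsf ord0 _).
    move=> s; apply: can_inj (ulsf (s ord0) s^-1%g) _ => k'.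
    by rewrite {1}/ulsf ulsfK !permK liftK.
  exists (fun s => perm (inj_ulsf s)) => [s _ | s].
    by apply/permP=> k'; rewrite permE /ulsf lift_perm_lift lift_perm_id liftK.
  move/(s _ =P _) => si0; apply/permP=> k.
  case: (unliftP ord0 k) => [k'|] ->; rewrite ?lift_perm_id //.
  by rewrite lift_perm_lift -si0 permE ulsfK.
rewrite /omega_pow mulr_sumr.
apply: eq_big => [s | s _]; first by rewrite lift_perm_id eqxx.
rewrite odd_lift_perm /= signr_addb.
have h0 : (0 < n.*2.+1)%N by [].
rewrite (fam_atE _ h0) /=.
have -> : Ordinal h0 = ord0 by apply: val_inj.
rewrite lift_perm_id.
have -> : \prod_(i < n) om (fam_at (v \o lift_perm ord0 j s) i.*2.+1)
                          (fam_at (v \o lift_perm ord0 j s) i.*2.+2) =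
          \prod_(i < n) om (fam_at ((v \o lift j) \o s) i.*2)
                          (fam_at ((v \o lift j) \o s) i.*2.+1).
  apply: eq_bigr => i _.
  have hi : (i < n)%N := ltn_ord i.
  have a1 : (i.*2.+1 < n.*2.+1)%N by lia.
  have a2 : (i.*2.+2 < n.*2.+1)%N by lia.
  have b1 : (i.*2 < n.*2)%N by lia.
  have b2 : (i.*2.+1 < n.*2)%N by lia.
  rewrite (fam_atE _ a1) (fam_atE _ a2) (fam_atE _ b1) (fam_atE _ b2) /=.
  have -> : Ordinal a1 = lift ord0 (Ordinal b1) by apply: val_inj.
  have -> : Ordinal a2 = lift ord0 (Ordinal b2) by apply: val_inj.
  by rewrite !lift_perm_lift.
by rewrite signr_odd -!mulrA; congr (_ * _); rewrite mulrCA.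
Qed.
End Teo.

Section Alg.
Variables (R : realType) (V : lmodType R).

Section Eta.
Variables (eta : V -> R) (le : linear_form eta).
Lemma eta0 : eta 0 = 0.
Proof. have := le 1 0 0; rewrite scale1r addr0 mul1r => h; lra. Qed.
Lemma etaD x y : eta (x + y) = eta x + eta y.
Proof. by rewrite -[x]scale1r le mul1r scale1r. Qed.
Lemma etaZ a x : eta (a *: x) = a * eta x.
Proof. by rewrite -[a *: x]addr0 le eta0 addr0. Qed.
Lemma etaN x : eta (- x) = - eta x.
Proof. by rewrite -scaleN1r etaZ mulN1r. Qed.
Lemma etaB x y : eta (x - y) = eta x - eta y.
Proof. by rewrite etaD etaN. Qed.
Lemma eta_sum (I : Type) (r : seq I) (P : pred I) (b : I -> R) (w : I -> V) :
  eta (\sum_(i <- r | P i) b i *: w i) = \sum_(i <- r | P i) b i * eta (w i).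
Proof.
elim/big_rec2: _ => [|i y1 y2 _ <-]; first exact: eta0.
by rewrite le.
Qed.
End Eta.

Section Om.
Variables (om : V -> V -> R) (tf : two_form om).
Lemma om0l y : om 0 y = 0.
Proof. case: tf => o1 _; have := o1 1 0 0 y; rewrite scale1r addr0 mul1r => h; lra. Qed.
Lemma om0r y : om y 0 = 0.
Proof. case: tf => _ [o2 _]; have := o2 1 y 0 0; rewrite scale1r addr0 mul1r => h; lra. Qed.
Lemma omDl x y z : om (x + y) z = om x z + om y z.
Proof. case: tf => o1 _. by rewrite -[x]scale1r o1 mul1r scale1r. Qed.
Lemma omDr x y z : om z (x + y) = om z x + om z y.
Proof. case: tf => _ [o2 _]. by rewrite -[x]scale1r o2 mul1r scale1r. Qed.
Lemma omZl a x z : om (a *: x) z = a * om x z.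
Proof. case: tf => o1 _. by rewrite -[a *: x]addr0 o1 om0l addr0. Qed.
Lemma omZr a x z : om z (a *: x) = a * om z x.
Proof. case: tf => _ [o2 _]. by rewrite -[a *: x]addr0 o2 om0r addr0. Qed.
Lemma omNl x z : om (- x) z = - om x z.
Proof. by rewrite -scaleN1r omZl mulN1r. Qed.
Lemma omNr x z : om z (- x) = - om z x.
Proof. by rewrite -scaleN1r omZr mulN1r. Qed.
Lemma omBl x y z : om (x - y) z = om x z - om y z.
Proof. by rewrite omDl omNl. Qed.
Lemma omBr x y z : om z (x - y) = om z x - om z y.
Proof. by rewrite omDr omNr. Qed.
Lemma om_anti x y : om x y = - om y x.
Proof.
case: tf => _ [_ o3]; have := o3 (x + y).
rewrite omDl !omDr !o3 add0r addr0 => h; lra.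
Qed.
Lemma om_sumL (I : Type) (r : seq I) (P : pred I) (b : I -> R) (w : I -> V) y :
  om (\sum_(i <- r | P i) b i *: w i) y = \sum_(i <- r | P i) b i * om (w i) y.
Proof.
elim/big_rec2: _ => [|i y1 y2 _ <-]; first exact: om0l.
by rewrite omDl omZl.
Qed.
Lemma om_sumR (I : Type) (r : seq I) (P : pred I) (b : I -> R) (w : I -> V) y :
  om y (\sum_(i <- r | P i) b i *: w i) = \sum_(i <- r | P i) b i * om y (w i).
Proof.
elim/big_rec2: _ => [|i y1 y2 _ <-]; first exact: om0r.
by rewrite omDr omZr.
Qed.
End Om.
Section Br.
Variables (br : V -> V -> V) (bl : bilinear_map br).
Lemma br0l y : br 0 y = 0.
Proof. case: bl => b1 _; have := b1 1 0 0 y; rewrite !scale1r addr0 => h.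
by move/(congr1 (fun t => t - br 0 y)): h; rewrite subrr addrK. Qed.
Lemma br0r y : br y 0 = 0.
Proof. case: bl => _ b2; have := b2 1 y 0 0; rewrite !scale1r addr0 => h.
by move/(congr1 (fun t => t - br y 0)): h; rewrite subrr addrK. Qed.
Lemma brDl x y z : br (x + y) z = br x z + br y z.
Proof. case: bl => b1 _. by rewrite -[x]scale1r b1 !scale1r. Qed.
Lemma brDr x y z : br z (x + y) = br z x + br z y.
Proof. case: bl => _ b2. by rewrite -[x]scale1r b2 !scale1r. Qed.
Lemma brZl a x z : br (a *: x) z = a *: br x z.
Proof. case: bl => b1 _. by rewrite -[a *: x]addr0 b1 br0l addr0. Qed.
Lemma brZr a x z : br z (a *: x) = a *: br z x.
Proof. case: bl => _ b2. by rewrite -[a *: x]addr0 b2 br0r addr0. Qed.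
Lemma brNl x z : br (- x) z = - br x z.
Proof. by rewrite -scaleN1r brZl scaleN1r. Qed.
Lemma brNr x z : br z (- x) = - br z x.
Proof. by rewrite -scaleN1r brZr scaleN1r. Qed.
Lemma brBl x y z : br (x - y) z = br x z - br y z.
Proof. by rewrite brDl brNl. Qed.
Lemma brBr x y z : br z (x - y) = br z x - br z y.
Proof. by rewrite brDr brNr. Qed.
Lemma br_anti (al : forall x, br x x = 0) x y : br x y = - br y x.
Proof.
have := al (x + y); rewrite brDl !brDr !al add0r addr0 => /eqP.
by rewrite addr_eq0 => /eqP.
Qed.
End Br.
End Alg.

Lemma vec_eq (R : realType) (K : vectType R) (u w : K) :
  (forall i, coord (vbasis fullv) i u = coord (vbasis fullv) i w) -> u = w.
Proof.
move=> h; rewrite (coord_vbasis (memvf u)) (coord_vbasis (memvf w)).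
by apply: eq_bigr => i _; rewrite h.
Qed.

Section Fwd.
Variables (R : realType) (V : vectType R) (n : nat) (eta : V -> R) (om : V -> V -> R).
Hypotheses (le : linear_form eta) (tf : two_form om) (dimV : \dim {:V} = n.*2.+1).
Variable v0 : 'I_(n.*2.+1) -> V.
Hypothesis Fv0 : eta_omega_pow eta om v0 != 0.

Let X := [tuple v0 i | i < n.*2.+1].

Lemma X_nth (i : 'I_(n.*2.+1)) : X`_i = v0 i.
Proof. by rewrite -tnth_nth tnth_mktuple. Qed.

Lemma free_v0 (x : 'I_(n.*2.+1) -> R) : \sum_i x i *: v0 i = 0 -> forall i, x i = 0.
Proof.
move=> hs i.
have := psum_key (Teo_lin le tf) v0 i x.
rewrite hs psum_upd0; last exact: Teo_lin.
move=> /esym/eqP; rewrite mulf_eq0 -eop_psum (negbTE Fv0) orbF => /eqP //.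
Qed.

Lemma span_v0 y : y = \sum_i coord X i y *: v0 i.
Proof.
have bX : basis_of fullv X.
  rewrite basisEfree subvf size_tuple dimV leqnn !andbT.
  apply/freeP => k hk i; apply: free_v0 => //.
  by rewrite -[RHS]hk; apply: eq_bigr => j _; rewrite X_nth.
rewrite {1}(coord_span (v := y) (X := X)) ?(span_basis bX) ?memvf //.
by apply: eq_bigr => j _; rewrite X_nth.
Qed.

Lemma ker0 d : eta d = 0 -> (forall x, om d x = 0) -> d = 0.
Proof.
move=> e1 e2.
have e3 : forall x, om x d = 0 by move=> x; rewrite (om_anti tf) e2 oppr0.
have Hd := span_v0 d.
suff hb : forall k, coord X k d = 0.
  by rewrite Hd big1 // => k _; rewrite hb scale0r.
move=> k; have := psum_key (Teo_lin le tf) v0 k (fun i => coord X i d).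
rewrite -Hd.
have -> : psum (Teo eta om) (upd v0 k d) = 0.
  by rewrite /psum big1 // => s _; rewrite upd_comp Teo_zero // mulr0.
move=> /esym/eqP; rewrite mulf_eq0 -eop_psum (negbTE Fv0) orbF => /eqP //.
Qed.

Lemma om_span u : (forall l, om u (v0 l) = 0) -> forall y, om u y = 0.
Proof.
move=> h y; rewrite (span_v0 y) (om_sumR tf) big1 // => l _; by rewrite h mulr0.
Qed.

Lemma reeb_ex : exists xi, is_reeb eta om xi.
Proof.
pose G : 'M[R]_(n.*2.+1) := \matrix_(k, l) om (v0 k) (v0 l).
have GT : G^T = - G by apply/matrixP => k l; rewrite !mxE (om_anti tf).
have dG : \det G == 0.
  have : \det G = - \det G.
    by rewrite -{1}det_tr GT -scaleN1r detZ -signr_odd /= odd_double /= expr1 mulN1r.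
  move=> h; apply/eqP; lra.
case/det0P: dG => x x0 xG.
pose u := \sum_k x 0 k *: v0 k.
have omu : forall y, om u y = 0.
  apply: om_span => l; rewrite (om_sumL tf).
  transitivity ((x *m G) 0 l); last by rewrite xG mxE.
  by rewrite mxE; apply: eq_bigr => k _; rewrite mxE.
have u0 : u != 0.
  apply: contra x0 => /eqP hu; apply/eqP/rowP => k.
  by rewrite (free_v0 hu) mxE.
have eu : eta u != 0.
  by apply: contra u0 => /eqP eu; apply/eqP/ker0.
exists ((eta u)^-1 *: u); split.
  by rewrite (etaZ le) mulVf.
by move=> y; rewrite (omZl tf) omu mulr0.
Qed.

Lemma reeb_uniq xi1 xi2 : is_reeb eta om xi1 -> is_reeb eta om xi2 -> xi1 = xi2.
Proof.
move=> [e1 o1] [e2 o2]; apply/eqP; rewrite -subr_eq0; apply/eqP/ker0.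
  by rewrite (etaB le) e1 e2 subrr.
by move=> y; rewrite (omBl tf) o1 o2 subrr.
Qed.

Lemma nondeg_lift : exists j, omega_pow om (v0 \o lift j) != 0.
Proof.
apply/existsP; apply: contraR Fv0; rewrite negb_exists => /forallP h.
rewrite eop_expand big1 // => j _.
by have := h j; rewrite negbK => /eqP ->; rewrite mulr0.
Qed.

End Fwd.

Unset Implicit Arguments.
Section LinEta.
Variables (R : realType) (V : vectType R) (eta : V -> R) (le : linear_form eta).
Definition etaF : V -> R^o := eta.
Lemma etaF_lin : linear etaF. Proof. move=> a x y; exact: le. Qed.
HB.instance Definition _ := GRing.isLinear.Build R V R^o _ etaF etaF_lin.
Lemma lfE x : linfun (eta : V -> R^o) x = eta x.
Proof. exact: (lfunE etaF). Qed.
End LinEta.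

Lemma pairZ (R : realType) (A B : lmodType R) (a : R) (u : A) (v : B) :
  a *: ((u, v) : (A * B)%type) = (a *: u, a *: v).
Proof. by []. Qed.
Lemma pairD (R : realType) (A B : lmodType R) (u u' : A) (v v' : B) :
  ((u, v) : (A * B)%type) + (u', v') = (u + u', v + v').
Proof. by []. Qed.

Lemma scaleo (R : realType) (a : R) (s : R^o) : a *: s = a * s.
Proof. by []. Qed.

Lemma der_ad (R : realType) (V : lmodType R) (br : V -> V -> V) : is_lie br ->
  forall z x y, br z (br x y) = br (br z x) y + br x (br z y).
Proof.
move=> [bl [al jac]] z x y.
have := jac z x y.
rewrite (br_anti bl al y z) (brNr bl) (br_anti bl al y (br z x)) => /eqP.
rewrite -addrA -opprD subr_eq0 addrC => /eqP //.
Qed.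

Theorem mainTheorem4 (R : realType) (alpha : R) (n : nat) (hn : (1 <= n)%N) :
  (* forward: alpha-cosymplectic g  |-->  (ker eta, omega|_h, ad_xi|_h) *)
  (forall (V : vectType R) (br : V -> V -> V) (eta : V -> R) (om : V -> V -> R),
     \dim {: V} = n.*2.+1 -> is_lie br -> alpha_cosymplectic n br alpha eta om ->
     (exists! xi : V, is_reeb eta om xi) /\
     forall xi : V, is_reeb eta om xi ->
       let h := subvs_of (lker (linfun (eta : V -> R^o))) in
       let Om := fun x y : h => om (vsval x) (vsval y) in
       \dim {: h} = n.*2 /\
       exists (brh : h -> h -> h) (D : h -> h),
         (forall x y, vsval (brh x y) = br (vsval x) (vsval y)) /\
         (forall x, vsval (D x) = br xi (vsval x)) /\
         is_lie brh /\ symplectic n brh Om /\ derivation brh D /\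
         inf_symplectic Om (fun x => D x + alpha *: x) /\
         (* the inverse construction applied to (h, Om, D) gives back g *)
         let phi := fun p : (R^o * h)%type => p.1 *: xi + vsval p.2 in
         bijective phi /\
         (forall p q, phi (ext_br brh D p q) = br (phi p) (phi q)) /\
         (forall p, eta (phi p) = p.1) /\
         (forall p q, om (phi p) (phi q) = Om p.2 q.2)) /\
  (* backward: (h, Om, D)  |-->  g = R xi (+) h *)
  (forall (H : vectType R) (brh : H -> H -> H) (Om : H -> H -> R) (D : H -> H),
     \dim {: H} = n.*2 -> is_lie brh -> symplectic n brh Om -> derivation brh D ->
     inf_symplectic Om (fun x => D x + alpha *: x) ->
     let brg := ext_br brh D in
     let etag := fun p : (R^o * H)%type => (p.1 : R) in
     let omg := fun p q : (R^o * H)%type => Om p.2 q.2 in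
     \dim {: (R^o * H)%type} = n.*2.+1 /\ is_lie brg /\
     alpha_cosymplectic n brg alpha etag omg /\
     is_reeb etag omg (1, 0) /\
     (* the forward construction applied to g gives back (h, Om, D) *)
     (forall p, etag p = 0 <-> p = (0, p.2)) /\
     (forall x y, brg (0, x) (0, y) = (0, brh x y)) /\
     (forall x, brg (1, 0) (0, x) = (0, D x)) /\
     (forall x y, omg (0, x) (0, y) = Om x y)).

Proof.
split.
{ move=> V br eta om dimV lie [[le [tf [v0 Fv0]]] [d1h d2h]].
  split.
    have [xi hxi] := reeb_ex le tf dimV Fv0.
    exists xi; split; first exact: hxi.
    move=> xi' h'; exact: (reeb_uniq le tf dimV Fv0 hxi h').
  move=> xi [exi oxi] h Om.
  set U := lker (linfun (eta : V -> R^o)) in h Om *.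
  have memU : forall x, (x \in U) = (eta x == 0) by move=> x; rewrite memv_ker lfE.
  have oxi' : forall y, om y xi = 0 by move=> y; rewrite (om_anti tf) oxi oppr0.
  have etah : forall x : h, eta (vsval x) = 0 by move=> x; apply/eqP; rewrite -memU subvsP.
  case: (lie) => [[bl1 bl2] [al jac]].
  have bl : bilinear_map br by [].
  split.
    rewrite dimvf; change (\dim U = n.*2).
    have := limg_ker_dim (linfun (eta : V -> R^o)) fullv.
    rewrite capfv dimV.
    suff -> : \dim (linfun (eta : V -> R^o) @: fullv) = 1%N.
      by move=> hh; rewrite /U; lia.
    apply/eqP; rewrite eqn_leq; apply/andP; split.
      by have := dimvS (subvf (linfun (eta : V -> R^o) @: fullv)); rewrite dimvf.
    rewrite lt0n dimv_eq0; apply/negP => /eqP h0.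
    have := memv_img (linfun (eta : V -> R^o)) (memvf xi).
    by rewrite h0 memv0 lfE // exi oner_eq0.
  pose brh := fun x y : h => vsproj U (br (vsval x) (vsval y)).
  pose D := fun x : h => vsproj U (br xi (vsval x)).
  have Hbr : forall x y, vsval (brh x y) = br (vsval x) (vsval y).
    move=> x y; rewrite vsprojK // memU; have := d1h (vsval x) (vsval y).
    by rewrite /d1 => /eqP; rewrite oppr_eq0.
  have HD : forall x, vsval (D x) = br xi (vsval x).
    move=> x; rewrite vsprojK // memU; have := d1h xi (vsval x).
    by rewrite /d1 => /eqP; rewrite oppr_eq0.
  exists brh, D; split; first exact: Hbr.
  split; first exact: HD.
  have lieh : is_lie brh.
    split; first split.
    - move=> a x y z; apply: subvs_inj; rewrite !Hbr !linearP /= !Hbr; exact: bl1.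
    - move=> a x y z; apply: subvs_inj; rewrite !Hbr !linearP /= !Hbr; exact: bl2.
    split; first by move=> x; apply: subvs_inj; rewrite Hbr al linear0.
    move=> x y z; apply: subvs_inj; rewrite !raddfD /= !Hbr; exact: jac.
  split; first exact: lieh.
  split.
    split.
      split; first by move=> a x y z; rewrite /Om linearP /= (omDl tf) (omZl tf).
      split; first by move=> a x y z; rewrite /Om linearP /= (omDr tf) (omZr tf).
      by move=> x; case: tf => _ [_ o3]; rewrite /Om o3.
    split.
      move=> x y z; rewrite /d2 /Om !Hbr.
      have := d2h (vsval x) (vsval y) (vsval z).
      by rewrite /d2 /wedge12 !etah !mul0r !addr0 mulr0.
    have [j hj] := nondeg_lift Fv0.
    pose p x := x - eta x *: xi.
    have pU : forall x, p x \in U by move=> x; rewrite memU /p (etaB le) (etaZ le) exi mulr1 subrr.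
    exists (fun a => vsproj U (p (v0 (lift j a)))).
    rewrite -(@omega_pow_ext _ _ n _ om Om (v0 \o lift j)) // => a b.
    rewrite /Om !vsprojK // /p (omBl tf) !(omBr tf) !(omZl tf) !(omZr tf) oxi oxi'.
    by rewrite !mulr0 !subr0 /= oxi !mulr0 subrr subr0.
  split.
    split.
      by move=> a x y; apply: subvs_inj; rewrite !HD !linearP /= !HD; exact: bl2.
    move=> x y; apply: subvs_inj; rewrite !raddfD /= !HD !Hbr !HD.
    exact: der_ad.
  split.
    move=> x y; rewrite /Om !linearD !linearZ /= !HD.
    have := d2h xi (vsval x) (vsval y).
    rewrite /d2 /wedge12 !etah exi oxi' (br_anti bl al (vsval y) xi) (omNl tf).
    rewrite (om_anti tf (br xi (vsval y))) (omDl tf) (omDr tf) (omZl tf) (omZr tf).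
    move=> h0; lra.
  move=> phi.
  split.
    exists (fun q => ((eta q : R^o), vsproj U (q - eta q *: xi))).
      case=> a x; rewrite /phi /=.
      have -> : eta (a *: xi + vsval x) = a by rewrite (etaD le) (etaZ le) exi etah mulr1 addr0.
      by rewrite [_ + vsval x]addrC addrK vsvalK.
    move=> q; rewrite /phi /= vsprojK; first by rewrite addrC subrK.
    by rewrite memU (etaB le) (etaZ le) exi mulr1 subrr.
  split.
    case=> s x [t y]; rewrite /phi /ext_br /= scale0r add0r.
    rewrite Hbr !HD (brDl bl) !(brDr bl) !(brZl bl) !(brZr bl) al (br_anti bl al (vsval x) xi).
    apply: vec_eq => i; rewrite ?linearD ?linearB ?linearN ?linearZ /=. ring.
  split.
    by case=> a x; rewrite /phi /= (etaD le) (etaZ le) exi etah mulr1 addr0.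
  case=> s x [t y]; rewrite /phi /= (omDl tf) !(omDr tf) !(omZl tf) !(omZr tf) !oxi !oxi'.
  by rewrite !mulr0 !add0r ?addr0. }
move=> H brh Om D dimH lie [tfO [clO [v1 Fv1]]] [Dlin Dder] infs brg etag omg.
case: (lie) => [[bl1 bl2] [al jac]].
have bl : bilinear_map brh by [].
have Dlin' : forall a x y, D (a *: x + y) = a *: D x + D y by [].
have DD x y : D (x + y) = D x + D y by rewrite -[x]scale1r Dlin' !scale1r.
have D0 : D 0 = 0.
  have := Dlin' 1 0 0; rewrite !scale1r !addr0 => h0.
  by move/(congr1 (fun t => t - D 0)): h0; rewrite subrr addrK => h1; exact: esym h1.
have DZ a x : D (a *: x) = a *: D x by rewrite -[a *: x]addr0 Dlin' D0 addr0.
split.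
  by rewrite dimvf /= -dimH dimvf.
have lieg : is_lie brg.
  split; first split.
  - move=> a [s x] [t y] [r z]; rewrite /brg /ext_br /=.
    rewrite pairZ pairD; congr pair; first by rewrite ?mulr0 ?scaler0 addr0.
    rewrite (brDl bl) (brZl bl) DD DZ.
    apply: vec_eq => i; rewrite ?linearD ?linearB ?linearN ?linearZ /=. rewrite ?scaleo. ring.
  - move=> a [s x] [t y] [r z]; rewrite /brg /ext_br /=.
    rewrite pairZ pairD; congr pair; first by rewrite ?mulr0 ?scaler0 addr0.
    rewrite (brDr bl) (brZr bl) DD DZ.
    apply: vec_eq => i; rewrite ?linearD ?linearB ?linearN ?linearZ /=. rewrite ?scaleo. ring.
  split.
    by move=> [s x]; rewrite /brg /ext_br /= al add0r subrr.
  move=> [s x] [t y] [r z]; rewrite /brg /ext_br /=.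
  have zp : (0 : (R^o * H)%type) = (0, 0) by [].
  rewrite !pairD zp; congr pair; first by rewrite !addr0.
  have DN u : D (- u) = - D u by rewrite -scaleN1r DZ scaleN1r.
  rewrite !scale0r !subr0 !(brDr bl) !(brNr bl) !(brZr bl) !DD !DN !DZ !Dder.

  have J := jac x y z.
  rewrite (br_anti bl al z (D y)) (br_anti bl al x (D z)) (br_anti bl al y (D x)).
  have J' : brh z (brh x y) = - (brh x (brh y z) + brh y (brh z x)).
    by apply/eqP; rewrite -subr_eq0 opprK addrC J.
  rewrite J'.
  apply: vec_eq => i; rewrite ?linearD ?linearB ?linearN ?linearZ /=. ring.
split; first exact: lieg.
split.
  split.
    split; first by move=> a p q.
    split.
      split; first by move=> a p q r; rewrite /omg /= (omDl tfO) (omZl tfO).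
      split; first by move=> a p q r; rewrite /omg /= (omDr tfO) (omZr tfO).
      by move=> p; case: tfO => _ [_ o3]; rewrite /omg o3.
    pose w (j : 'I_(n.*2.+1)) : (R^o * H)%type :=
      if unlift ord0 j is Some k then (0, v1 k) else (1, 0).
    exists w; rewrite eop_expand (bigD1 ord0) //= big1 ?addr0.
      have -> : w ord0 = (1, 0) by rewrite /w unlift_none.
      rewrite expr0 !mul1r.
      rewrite (@omega_pow_ext _ _ n _ omg Om (w \o lift ord0) v1) // => a b.
      by rewrite /w /= !liftK.
    move=> j j0; have : etag (w j) = 0.
      by rewrite /w; case: unliftP => [k _|e] //; rewrite e eqxx in j0.
    by move=> ->; rewrite mulr0 mul0r.
  split.
    by move=> p q; rewrite /d1 /etag /brg /ext_br /= oppr0.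
  move=> [s x] [t y] [r z]; rewrite /d2 /wedge12 /omg /etag /brg /ext_br /=.
  rewrite !(omDl tfO) ?(omNl tfO) !(omZl tfO).
  have i1 : forall u v, Om (D v) u = Om (D u) v - 2 * alpha * Om v u.
    move=> u v; have := infs v u; rewrite (omDl tfO) (omDr tfO) (omZl tfO) (omZr tfO).
    rewrite (om_anti tfO v (D u)) => h0; lra.
  rewrite (i1 z y) (i1 z x) (i1 x y).
  have c := clO x y z; rewrite /d2 in c.
  have c' : Om (brh z x) y = - Om (brh x y) z - Om (brh y z) x by lra.
  rewrite c' (om_anti tfO x z) (om_anti tfO y x).
  ring.
split.
  by split => //= y; rewrite /omg /= (om0l tfO).
split.
  by move=> [a x] /=; split => [->|[]].
split.
  by move=> x y; rewrite /brg /ext_br /= !scale0r subr0 addr0.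
split.
  by move=> x; rewrite /brg /ext_br /= (br0l bl) D0 scale1r scale0r subr0 add0r.
by [].
Qed.
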